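(* Let $f(x)=\sum_{n\ge1}q_n x^n$ be a formal power series with complex coefficients and $q:=q_1\ne0$. For all integers $s\ge 0$ and $n\ge k\ge 0$, \[ \begin{bmatrix} n\\ k\end{bmatrix}_{\phi^s}=\frac{n!}{k!}\sum_{\vec L\in\mathcal P_{n-k}} C(\vec L)\prod_{p=1}^{n-k} q_{p+1}^{L_p}, \] where \[ C(\vec L):=\sum_{\vec\ell_1+\cdots+\vec\ell_s=\vec L} q^{\sum_{t=1}^s (s-t)\langle\vec\ell_t\rangle+sk-|\vec L|}\prod_{i=1}^s\binom{\sum_{t=1}^{i-1}\langle\vec\ell_t\rangle+k}{\vec\ell_i,\ \sum_{t=1}^{i-1}\langle\vec\ell_t\rangle+k-|\vec\ell_i|}, \] the sum being over all $s$-tuples $(\vec\ell_1,\dots,\vec\ell_s)$ of finitely supported sequences $\vec\ell_t\in\mathbb{N}^{\mathbb{N}^*}$ with $\vec\ell_1+\cdots+\vec\ell_s=\vec L$ (componentwise).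
   Context: For an integer $s\ge0$, $f^s$ is the $s$-fold compositional iterate of $f$ ($f^0(x)=x$), and $\begin{bmatrix} n\\ k\end{bmatrix}_{\phi^s}$ is defined by $\frac{f^s(x)^k}{k!}=\sum_{n\ge k}\begin{bmatrix} n\\ k\end{bmatrix}_{\phi^s}\frac{x^n}{n!}$. Multi-indices: $\vec\ell=(\ell_1,\ell_2,\dots)$ with $\ell_p\in\mathbb{N}$ and finitely many nonzero; $|\vec\ell|:=\sum_p\ell_p$ and $\langle\vec\ell\rangle:=\sum_p p\,\ell_p$. $\mathcal P_m$ is the set of such $\vec\ell$ with $\ell_p=0$ for $p>m$ and $\langle\vec\ell\rangle=m$. For an integer $N$ and multi-index $\vec\ell$, $\binom{N}{\vec\ell,\,r}:=\frac{N!}{\ell_1!\ell_2!\cdots\, r!}$ with $r=N-|\vec\ell|$, understood to be $0$ when $r<0$. *)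

(* Defs.v *)
From HB Require Import structures.
From mathcomp Require Import all_boot all_order all_algebra.
From mathcomp Require Import reals complex.
Set Implicit Arguments. Unset Strict Implicit. Unset Printing Implicit Defensive.
Import Order.TTheory GRing.Theory Num.Theory.
Local Open Scope ring_scope.

Section FPS.
Variable C : fieldType.

Definition fps := nat -> C.

Definition fps_mul (a b : fps) : fps :=
  fun n => \sum_(i < n.+1) a i * b (n - i)%N.

Fixpoint fps_exp (a : fps) (k : nat) : fps :=
  match k with
  | 0 => fun n => (n == 0%N)%:R
  | k'.+1 => fps_mul a (fps_exp a k')
  end.

(* Composition g(h(x)), meaningful when h has zero constant term. *)
Definition fps_comp (g h : fps) : fps :=
  fun n => \sum_(j < n.+1) g j * fps_exp h j n.

Fixpoint fps_iter (f : fps) (s : nat) : fps :=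
  match s with
  | 0 => fun n => (n == 1%N)%:R
  | s'.+1 => fps_comp f (fps_iter f s')
  end.

(* [n, k]_{phi^s} defined by f^s(x)^k / k! = sum_n [n,k]_{phi^s} x^n / n!. *)
Definition bracket_phi (f : fps) (s n k : nat) : C :=
  n`!%:R * fps_exp (fps_iter f s) k n / k`!%:R.

Definition series_of (q : nat -> C) : fps :=
  fun n => if n is 0 then 0 else q n.

(* Multi-indices with support in {1..m}: l : 'I_m -> nat, l j = l_{j+1}.
   Entries are bounded by m (enough for all indices occurring below). *)
Definition mindex (m : nat) := {ffun 'I_m -> 'I_m.+1}.

Definition mabs m (l : mindex m) : nat := (\sum_(j < m) l j)%N.
Definition mwt m (l : mindex m) : nat := (\sum_(j < m) j.+1 * l j)%N.

Definition multinom m (N : nat) (l : mindex m) : C :=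
  if (mabs l <= N)%N then
    N`!%:R / ((\prod_(j < m) (l j)`!)%N * (N - mabs l)`!)%:R
  else 0.

Definition coefC (q1 : C) (s k m : nat) (L : mindex m) : C :=
  \sum_(ls : {ffun 'I_s -> mindex m} |
          [forall j : 'I_m, (\sum_(t < s) ls t j)%N == L j])
    (q1 ^ ((\sum_(t < s) (s - t.+1) * mwt (ls t) + s * k)%N%:Z - (mabs L)%:Z)
     * \prod_(i < s)
         multinom ((\sum_(t < s | (t < i)%N) mwt (ls t))%N + k) (ls i)).

Definition rhs_phi (q : nat -> C) (s n k : nat) : C :=
  n`!%:R / k`!%:R *
  \sum_(L : mindex (n - k) | mwt L == (n - k)%N)
    (coefC (q 1%N) s k L * \prod_(j < n - k) q j.+2 ^+ L j).

End FPS.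

(* Main.v *)
Require Import Defs.
From HB Require Import structures.
From mathcomp Require Import all_boot all_order all_algebra.
From mathcomp Require Import reals complex.
From mathcomp Require Import zify ring lra.
Import Order.TTheory GRing.Theory Num.Theory.
Local Open Scope ring_scope.
Set Implicit Arguments. Unset Strict Implicit.

Section Part1.
Variable C : numFieldType.

Lemma coef_exp_low (H : {poly C}) : H`_0 = 0 ->
  forall i n, (n < i)%N -> (H ^+ i)`_n = 0.
Proof.
move=> H0; elim=> [|i IH] n //= lt_ni.
rewrite exprS coefM big1 // => j _.
case: j => [[|j]] /= hj; first by rewrite H0 mul0r.
by rewrite IH ?mulr0 //; lia.
Qed.

Lemma exp_poly (a : fps C) (A : {poly C}) N :
  (forall i, (i <= N)%N -> a i = A`_i) ->
  forall k n, (n <= N)%N -> fps_exp a k n = (A ^+ k)`_n.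
Proof.
move=> hA; elim=> [|k IH] n hn /=; first by rewrite expr0 coef1.
rewrite exprS coefM /fps_mul; apply: eq_bigr => [[j hj]] _ /=.
rewrite hA ?IH //; lia.
Qed.

Lemma coef_comp_low (G H : {poly C}) n : H`_0 = 0 ->
  (G \Po H)`_n = \sum_(j < n.+1) G`_j * (H ^+ j)`_n.
Proof.
move=> H0; rewrite coef_comp_poly.
rewrite (big_ord_widen (n.+1 + size G) (fun j => G`_j * (H ^+ j)`_n)) ?leq_addl //.
rewrite [RHS](big_ord_widen (n.+1 + size G) (fun j => G`_j * (H ^+ j)`_n)) ?leq_addr //.
rewrite big_mkcond [RHS]big_mkcond; apply: eq_bigr => [[j hj]] _ /=.
case: ltnP => h1; case: ltnP => h2 //.
  by rewrite coef_exp_low ?mulr0.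
by rewrite nth_default ?mul0r.
Qed.

Lemma comp_low (g h : fps C) (G H : {poly C}) N :
  (forall i, (i <= N)%N -> g i = G`_i) ->
  (forall i, (i <= N)%N -> h i = H`_i) -> H`_0 = 0 ->
  forall n, (n <= N)%N -> fps_comp g h n = (G \Po H)`_n.
Proof.
move=> hG hH H0 n hn; rewrite coef_comp_low // /fps_comp.
apply: eq_bigr => [[j hj]] _ /=; rewrite hG; last by lia.
by rewrite (exp_poly hH).
Qed.

Lemma comp_exp (p r : {poly C}) N : (p ^+ N) \Po r = (p \Po r) ^+ N.
Proof.
elim: N => [|N IH]; first by rewrite !expr0 comp_polyC.
by rewrite !exprS comp_polyM IH.
Qed.

Definition Tp (F : {poly C}) s := iter s (fun T => F \Po T) 'X.

Lemma iter_poly (f : fps C) N : f 0%N = 0 ->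
  forall s, (forall i, (i <= N)%N -> fps_iter f s i = (Tp (\poly_(i < N.+1) f i) s)`_i)
   /\ (Tp (\poly_(i < N.+1) f i) s)`_0 = 0.
Proof.
move=> f0; elim=> [|s [IH1 IH0]].
  by split=> [i _|]; rewrite /= coefX.
have hF : forall i, (i <= N)%N -> f i = (\poly_(i < N.+1) f i)`_i.
  by move=> i hi; rewrite coef_poly ltnS hi.
have E := comp_low hF IH1 IH0.
split=> [i hi|]; first by rewrite /= E.
by rewrite /= -E // /fps_comp big_ord1 f0 mul0r.
Qed.
End Part1.

Section Part2.
Variable C : numFieldType.
Variable m : nat.
Implicit Types (l : mindex m) (j : 'I_m).

Definition dec (j : 'I_m) (l : mindex m) : mindex m := [ffun i => inord (l i - (i == j))].
Definition inc (j : 'I_m) (l : mindex m) : mindex m := [ffun i => inord (l i + (i == j))].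

Lemma decE j l i : (dec j l i : nat) = (l i - (i == j))%N.
Proof. rewrite ffunE inordK //; have := ltn_ord (l i); lia. Qed.

Lemma incE j l i : (l j < m)%N -> (inc j l i : nat) = (l i + (i == j))%N.
Proof.
move=> h; rewrite ffunE inordK //; case: eqP => [->|_]; have := ltn_ord (l i); lia.
Qed.

Lemma incK j l : (l j < m)%N -> dec j (inc j l) = l.
Proof. by move=> h; apply/ffunP => i; apply/val_inj; rewrite /= decE incE // addnK. Qed.

Lemma decK j l : (0 < l j)%N -> inc j (dec j l) = l.
Proof.
move=> h; apply/ffunP => i; apply/val_inj; rewrite /= incE ?decE.
  by case: eqP => [->|_]; lia.
rewrite eqxx; have := ltn_ord (l j); lia.
Qed.

Lemma big_dec (F : nat -> 'I_m -> nat) j l : (0 < l j)%N ->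
  (\sum_i F (l i) i = F (l j) j + \sum_i F (dec j l i) i - F (l j - 1) j)%N.
Proof.
move=> h; rewrite (bigD1 j) // [X in (_ + X - _)%N](bigD1 j) //= decE eqxx.
rewrite addnCA addKn; congr (_ + _)%N; apply: eq_bigr => i /negbTE hi.
by rewrite decE hi subn0.
Qed.

Lemma mabs_dec j l : (0 < l j)%N -> mabs l = (mabs (dec j l)).+1.
Proof.
move=> h; rewrite /mabs (big_dec (fun x _ => x) h) /=; lia.
Qed.

Lemma mwt_dec j l : (0 < l j)%N -> mwt l = (mwt (dec j l) + j.+1)%N.
Proof.
move=> h; rewrite /mwt (big_dec (fun x (i : 'I_m) => (nat_of_ord i).+1 * x)%N h) /=.
rewrite mulnBr muln1.
have : (j.+1 <= j.+1 * l j)%N by rewrite leq_pmulr.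
have : (j.+1 * l j <= j.+1 * l j + \sum_(i < m) i.+1 * (dec j l i))%N by rewrite leq_addr.
lia.
Qed.

Lemma prod_dec j l : (0 < l j)%N ->
  (\prod_i (l i)`! = l j * \prod_i (dec j l i)`!)%N.
Proof.
move=> h; rewrite (bigD1 j) // [X in (_ * X)%N](bigD1 j) //= decE eqxx.
rewrite mulnA; congr (_ * _)%N; last first.
  by apply: eq_bigr => i /negbTE hi; rewrite decE hi subn0.
by case: (l j : nat) h => // x _; rewrite factS subn1.
Qed.

Lemma le_mwt j l : (j.+1 * l j <= mwt l)%N.
Proof. by rewrite /mwt (bigD1 j) //= leq_addr. Qed.

Lemma le_mabs j l : (l j <= mabs l)%N.
Proof. by rewrite /mabs (bigD1 j) //= leq_addr. Qed.

Lemma fact_neq0 n : (n`!%:R : C) != 0.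
Proof. by rewrite pnatr_eq0 -lt0n fact_gt0. Qed.

Lemma prodfact_neq0 (l : mindex m) : ((\prod_i (l i)`!)%N%:R : C) != 0.
Proof. by rewrite pnatr_eq0 -lt0n prodn_gt0 // => i; rewrite fact_gt0. Qed.

Lemma pascal N l : multinom C N.+1 l =
  multinom C N l + \sum_(j < m | (0 < l j)%N) multinom C N (dec j l).
Proof.
rewrite /multinom; set r := mabs l; set P := (\prod_i (l i)`!)%N.
case: (leqP r N.+1) => hr; last first.
  rewrite ifF; last by apply/negbTE; rewrite -ltnNge; lia.
  rewrite add0r big1 // => j hj; rewrite ifF //; apply/negbTE; rewrite -ltnNge.
  move: hr; rewrite /r (mabs_dec hj); lia.
have HP := prodfact_neq0 l.
have HD := fact_neq0 (N.+1 - r).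
have E1 : forall j, (0 < l j)%N -> (if (mabs (dec j l) <= N)%N
     then N`!%:R / ((\prod_(j0 < m) (dec j l j0)`!)%N * (N - mabs (dec j l))`!)%:R
     else 0) = N`!%:R * (l j)%:R / (P * (N.+1 - r)`!)%:R :> C.
  move=> j hj; have hr' := mabs_dec hj.
  rewrite ifT; last by move: hr; rewrite /r hr'.
  have -> : (N - mabs (dec j l) = N.+1 - r)%N by rewrite /r hr'.
  rewrite /P (prod_dec hj) !natrM.
  have : ((l j : nat)%:R : C) != 0 by rewrite pnatr_eq0 -lt0n.
  have := prodfact_neq0 (dec j l).
  move=> h1 h2; field; rewrite HD h1 h2 //.
rewrite (eq_bigr _ E1) -mulr_suml -mulr_sumr.
have -> : \sum_(i < m | (0 < l i)%N) ((l i : nat)%:R : C) = r%:R.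
  rewrite /r /mabs natr_sum big_mkcond /=; apply: eq_bigr => i _.
  by case: ifP => //; rewrite lt0n => /negbFE /eqP ->.
have -> : (if (r <= N)%N then N`!%:R / (P * (N - r)`!)%:R else 0)
          = N`!%:R * (N.+1 - r)%:R / (P * (N.+1 - r)`!)%:R :> C.
  case: leqP => h.
    rewrite subSn // factS !natrM.
    have : (((N - r).+1)%:R : C) != 0 by rewrite pnatr_eq0.
    have := fact_neq0 (N - r).
    move=> h1 h2; field; by rewrite h1 HP (addrC 1) natr1 pnatr_eq0.
  have -> : (N.+1 - r = 0)%N by lia.
  by rewrite mulr0 mul0r.
rewrite factS natrM.
have -> : ((N.+1 - r)%:R : C) = N.+1%:R - r%:R by rewrite natrB.
move: HP HD; rewrite natrM -/P => HP HD.
field; rewrite HP HD //.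
Qed.

End Part2.

Section Part3.
Variable C : numFieldType.
Variable m : nat.
Implicit Types (l : mindex m) (j : 'I_m).
Variable q : nat -> C.
Hypothesis hq : q 1%N != 0.

Definition Qm l := \prod_(j < m) q j.+2 ^+ l j.
Definition w N l := multinom C N l * q 1%N ^ (N%:Z - (mabs l)%:Z) * Qm l.

Lemma Qm_dec j l : (0 < l j)%N -> Qm l = q j.+2 * Qm (dec j l).
Proof.
move=> h; rewrite /Qm (bigD1 j) // [X in _ * X](bigD1 j) //= decE eqxx mulrA.
congr (_ * _); last by apply: eq_bigr => i /negbTE hi; rewrite decE hi subn0.
by case: (l j : nat) h => // x _; rewrite subSS subn0 exprS.
Qed.

Lemma qu : q 1%N \is a GRing.unit. Proof. by rewrite unitfE. Qed.

Lemma w_pascal N l : w N.+1 l =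
  q 1%N * w N l + \sum_(j < m | (0 < l j)%N) q j.+2 * w N (dec j l).
Proof.
rewrite /w pascal mulrDl mulrDl big_distrl big_distrl /=; congr (_ + _).
  have -> : (N.+1%:Z - (mabs l)%:Z) = 1 + (N%:Z - (mabs l)%:Z) by lia.
  by rewrite [q 1%N ^ (1 + _)]exprzDr ?qu // expr1z; ring.
apply: eq_bigr => j hj; rewrite (Qm_dec hj).
have -> : (N.+1%:Z - (mabs l)%:Z) = (N%:Z - (mabs (dec j l))%:Z).
  by rewrite (mabs_dec hj); lia.
ring.
Qed.

Definition l0 : mindex m := [ffun => ord0].

Lemma mabs0 l : mabs l = 0%N -> l = l0.
Proof.
move=> h; apply/ffunP => i; apply/val_inj; rewrite ffunE /=.
by have := le_mabs i l; rewrite h; lia.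
Qed.

Lemma mabs_l0 : mabs l0 = 0%N.
Proof. by rewrite /mabs big1 // => i _; rewrite ffunE. Qed.
Lemma mwt_l0 : mwt l0 = 0%N.
Proof. by rewrite /mwt big1 // => i _; rewrite ffunE muln0. Qed.

Lemma w0 l : w 0 l = (l == l0)%:R.
Proof.
rewrite /w /multinom; case: eqP => [->|hne].
  rewrite mabs_l0 /= subn0 /Qm !big1 ?mul1n ?mulr1 ?expr0z ?divr1 //.
  - by move=> i _; rewrite ffunE expr0.
  - by move=> i _; rewrite ffunE.
rewrite ifF ?mul0r //; apply/negbTE; rewrite -ltnNge lt0n; apply/eqP => h.
by apply: hne; apply: mabs0.
Qed.

Variable F : {poly C}.
Hypothesis hF : forall i, (i <= m.+1)%N -> F`_i = series_of q i.

Lemma F0 : F`_0 = 0. Proof. by rewrite hF. Qed.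

Lemma inner N j e : (e <= m)%N ->
  \sum_(l | (mwt l == e) && (0 < l j)%N) w N (dec j l) =
  if (j < e)%N then \sum_(l | mwt l == (e - j.+1)%N) w N l else 0.
Proof.
move=> he; case: ltnP => hje; last first.
  rewrite big1 // => l /andP [/eqP hw hl].
  have := le_mwt j l; rewrite hw; have : (j.+1 <= j.+1 * l j)%N by rewrite leq_pmulr.
  move=> h1 h2; have := leq_trans h1 (leq_trans h2 hje); by rewrite ltnn.
rewrite (reindex_onto (inc j) (dec j)); last by move=> l /andP [_ h]; rewrite decK.
apply: eq_big => [l'|l' /andP [_ /eqP ->] //].
apply/idP/idP.
  move=> /andP [/andP [/eqP hw hl] /eqP hd].
  by move: hw; rewrite (mwt_dec hl) hd => <-; rewrite addnK.
move=> /eqP hw.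
have hlt : (l' j < m)%N.
  have h1 := le_mwt j l'; have h2 : (l' j <= j.+1 * l' j)%N by rewrite leq_pmull.
  rewrite hw in h1; move: h1 h2; move: (nat_of_ord (l' j)) => x h1 h2; nia.
rewrite incK // eqxx andbT.
have hp : (0 < inc j l' j)%N by rewrite incE // eqxx addn1.
by rewrite hp (mwt_dec hp) incK // hw andbT; apply/eqP; lia.
Qed.

Lemma M_formula N e : (e <= m)%N ->
  (F ^+ N)`_(N + e) = \sum_(l | mwt l == e) w N l.
Proof.
elim: N e => [|N IH] e he.
  rewrite expr0 coef1 add0n (eq_bigr _ (fun l _ => w0 l)).
  case: e he => [|e] he /=.
    rewrite (bigD1 l0) ?mwt_l0 //= eqxx big1 ?addr0 // => l /andP [_ /negbTE ->] //.
  by rewrite big1 // => l /eqP hl; case: eqP => // hl0; move: hl; rewrite hl0 mwt_l0.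
rewrite exprS coefM.
have -> : \sum_(i < (N.+1 + e).+1) F`_i * (F ^+ N)`_(N.+1 + e - i) =
          \sum_(p < e.+1) F`_p.+1 * (F ^+ N)`_(N + (e - p)).
  rewrite big_ord_recl F0 mul0r add0r.
  rewrite [RHS](big_ord_widen (N.+1 + e) (fun p => F`_p.+1 * (F ^+ N)`_(N + (e - p)))); last by lia.
  rewrite [RHS]big_mkcond; apply: eq_bigr => i _; rewrite lift0 /=; case: ltnP => h.
    by congr (_ * _`__); lia.
  by rewrite coef_exp_low ?F0 ?mulr0 //; have := ltn_ord i; lia.
rewrite (eq_bigr (fun p : 'I_e.+1 => F`_p.+1 * \sum_(l | mwt l == (e - p)%N) w N l)); last first.
  by move=> p _; rewrite IH //; have := ltn_ord p; lia.
rewrite big_ord_recl /= subn0 hF /=; last by lia.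
rewrite (eq_bigr _ (fun l _ => w_pascal N l)) big_split /= -mulr_sumr; congr (_ + _).
rewrite (exchange_big_dep predT) //=.
rewrite (eq_bigr (fun j : 'I_m => if (j < e)%N then q j.+2 * \sum_(l | mwt l == (e - j.+1)%N) w N l else 0)); last first.
  move=> j _; rewrite -mulr_sumr inner //; case: ifP => _ //; by rewrite mulr0.
rewrite -big_mkcond /=.
pose G := fun j : nat => q j.+2 * \sum_(l | mwt l == (e - j.+1)%N) w N l.
have -> : \sum_(i < e) F`_(lift ord0 i).+1 * \sum_(l | mwt l == (e - lift ord0 i)%N) w N l
   = \sum_(i < e) G i.
  apply: eq_bigr => p _; rewrite lift0 hF //; have := ltn_ord p; lia.
by rewrite (big_ord_widen_cond m predT G he).
Qed.

End Part3.

Section BigF.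
Variable C : numFieldType.
Variables (A : finType) (s : nat).

Definition consf (a : A) (g : {ffun 'I_s -> A}) : {ffun 'I_s.+1 -> A} :=
  [ffun i => if unlift ord0 i is Some j then g j else a].

Lemma consf0 a g : consf a g ord0 = a.
Proof. by rewrite ffunE unlift_none. Qed.

Lemma consfS a g j : consf a g (lift ord0 j) = g j.
Proof. by rewrite ffunE liftK. Qed.

Lemma big_ffunS (Fn : {ffun 'I_s.+1 -> A} -> C) :
  \sum_f Fn f = \sum_a \sum_(g : {ffun 'I_s -> A}) Fn (consf a g).
Proof.
rewrite pair_big /=.
rewrite (reindex (fun p : A * {ffun 'I_s -> A} => consf p.1 p.2)) //.
apply: onW_bij.
exists (fun f : {ffun 'I_s.+1 -> A} => (f ord0, [ffun j => f (lift ord0 j)])).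
  by move=> [a g] /=; rewrite consf0; congr pair; apply/ffunP => j; rewrite ffunE consfS.
move=> f; apply/ffunP => i; rewrite ffunE /=.
by case: unliftP => [j ->|->]; rewrite ?ffunE.
Qed.
End BigF.

Section Part4.
Variable C : numFieldType.
Variable m : nat.
Implicit Types (l : mindex m) (j : 'I_m).
Variable q : nat -> C.
Hypothesis hq : q 1%N != 0.
Variable F : {poly C}.
Hypothesis hF : forall i, (i <= m.+1)%N -> F`_i = series_of q i.

Definition G s N d := \sum_(ls : {ffun 'I_s -> mindex m} | (\sum_(t < s) mwt (ls t))%N == d)
   \prod_(i < s) w q (N + \sum_(t < s | (t < i)%N) mwt (ls t))%N (ls i).

Lemma Tp0 s : (Tp F s)`_0 = 0.
Proof.
elim: s => [|s IH] /=; first by rewrite coefX.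
by rewrite coef_comp_low // big_ord1 (F0 hF) mul0r.
Qed.

Lemma T_formula s N d : (d <= m)%N -> ((Tp F s) ^+ N)`_(N + d) = G s N d.
Proof.
elim: s N d => [|s IH] N d hd.
  rewrite /= coefXn /G big_mkcond.
  pose ls0 : {ffun 'I_0 -> mindex m} := [ffun i => l0 m].
  rewrite (bigD1 ls0) //= [X in _ + X]big1 ?addr0; last first.
    move=> ls /eqP hne; exfalso; apply: hne; apply/ffunP => -[t ht]; exfalso; move: (ht); by rewrite ltn0.
  rewrite !big_ord0 /=; case: d hd => [|d] _ /=; first by rewrite addn0 eqxx.
  by rewrite -[X in _ == X](addn0 N) eqn_add2l.
rewrite /= -comp_exp coef_comp_low ?Tp0 // -addnS big_split_ord /=.
rewrite big1 ?add0r; last first.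
  by move=> i _; rewrite coef_exp_low ?(F0 hF) ?mul0r.
rewrite (eq_bigr (fun e : 'I_d.+1 => (\sum_(l : mindex m | mwt l == e) w q N l) * G s (N + e)%N (d - e)%N)); last first.
  move=> e _; rewrite (M_formula hq hF); last by have := ltn_ord e; lia.
  have he : (e <= d)%N by have := ltn_ord e; lia.
  rewrite -IH; last by lia.
  by congr (_ * _`__); lia.
rewrite (eq_bigr (fun e : 'I_d.+1 => \sum_(l : mindex m | mwt l == e) (w q N l * G s (N + mwt l)%N (d - mwt l)%N))); last first.
  by move=> e _; rewrite mulr_suml; apply: eq_bigr => l /eqP ->.
rewrite (exchange_big_dep predT) //=.
rewrite (eq_bigr (fun l => if (mwt l < d.+1)%N then w q N l * G s (N + mwt l)%N (d - mwt l)%N else 0)); last first.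
  move=> l _.
  rewrite (eq_bigl (fun e : 'I_d.+1 => nat_of_ord e == mwt l)); last by move=> e; rewrite eq_sym.
  by rewrite (big_ord1_eq _ (fun _ => w q N l * G s (N + mwt l)%N (d - mwt l)%N)).
rewrite /G [RHS]big_mkcond big_ffunS.
apply: eq_bigr => a _.
have Hsum : forall g : {ffun 'I_s -> mindex m},
   (\sum_(t < s.+1) mwt (consf a g t) = mwt a + \sum_(t < s) mwt (g t))%N.
  by move=> g; rewrite big_ord_recl consf0; congr (_ + _)%N; apply: eq_bigr => t _; rewrite consfS.
have Hprod : forall g : {ffun 'I_s -> mindex m},
   \prod_(i < s.+1) w q (N + \sum_(t < s.+1 | (t < i)%N) mwt (consf a g t))%N (consf a g i)
   = w q N a * \prod_(i < s) w q (N + mwt a + \sum_(t < s | (t < i)%N) mwt (g t))%N (g i).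
  move=> g; rewrite big_ord_recl consf0 big_pred0 ?addn0 //; congr (_ * _).
  apply: eq_bigr => i _; rewrite consfS; congr (w q _ _).
  rewrite big_mkcond big_ord_recl consf0 -addnA; congr (_ + (_ + _))%N.
  rewrite [RHS]big_mkcond; apply: eq_bigr => t _; rewrite !lift0 ltnS consfS //.

under [RHS]eq_bigr => g _ do rewrite Hsum Hprod.
case: ltnP => ha.
  rewrite big_distrr /= [LHS]big_mkcond; apply: eq_bigr => g _.
  have -> : (mwt a + \sum_(t < s) mwt (g t) == d)%N = (\sum_(t < s) mwt (g t) == d - mwt a)%N.
    apply/eqP/eqP; lia.
  by case: ifP; rewrite ?mulr0.
rewrite big1 // => g _; rewrite ifF //; apply/negbTE/eqP; lia.
Qed.

End Part4.

Lemma cnt_gt (M s t : nat) :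
  (\sum_(i < s) (if (t < i)%N then M else 0))%N = ((s - t.+1) * M)%N.
Proof.
elim: s => [|s IH]; first by rewrite big_ord0.
rewrite big_ord_recr /= IH; case: ltnP => h.
  by rewrite -mulSnr; congr (_ * _)%N; lia.
by rewrite addn0; congr (_ * _)%N; lia.
Qed.

Lemma Posz_sum (s : nat) (f : 'I_s -> nat) :
  ((\sum_(i < s) f i)%N)%:Z = \sum_(i < s) (f i)%:Z.
Proof. by rewrite (big_morph Posz PoszD (erefl (Posz 0))). Qed.

Section Part5.
Variable C : numFieldType.
Variable m : nat.
Variable q : nat -> C.
Hypothesis hq : q 1%N != 0.

Lemma prodz s (z : 'I_s -> int) : \prod_(i < s) q 1%N ^ z i = q 1%N ^ (\sum_(i < s) z i).
Proof.
by rewrite (big_morph (fun z => q 1%N ^ z) (exprzDr (qu hq)) (expr0z (q 1%N))).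
Qed.

Lemma sum_mwt s (ls : {ffun 'I_s -> mindex m}) :
  (\sum_(t < s) mwt (ls t) = \sum_(j < m) j.+1 * \sum_(t < s) ls t j)%N.
Proof.
rewrite /mwt exchange_big /=; apply: eq_bigr => j _; by rewrite big_distrr.
Qed.

Lemma sum_le s (ls : {ffun 'I_s -> mindex m}) j :
  (\sum_(t < s) ls t j <= \sum_(t < s) mwt (ls t))%N.
Proof.
apply: leq_sum => t _; apply: leq_trans (le_mwt j (ls t)).
by rewrite leq_pmull.
Qed.

Definition hL s (ls : {ffun 'I_s -> mindex m}) : mindex m :=
  [ffun j => inord (\sum_(t < s) ls t j)].

Lemma G_coefC s k :
  G m q s k m = \sum_(L : mindex m | mwt L == m) (Defs.coefC (q 1%N) s k L * \prod_(j < m) q j.+2 ^+ L j).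
Proof.
rewrite /G (partition_big (@hL s) (fun L : mindex m => mwt L == m)); last first.
  move=> ls /eqP hs; apply/eqP; rewrite /mwt -[RHS]hs sum_mwt; apply: eq_bigr => j _.
  by rewrite ffunE inordK // ltnS; move: (sum_le ls j); rewrite hs.
apply: eq_bigr => L /eqP hL0.
rewrite /Defs.coefC mulr_suml; apply: eq_big.
  move=> ls; apply/idP/idP.
    move=> /andP [/eqP hs /eqP <-]; apply/forallP => j.
    by rewrite ffunE inordK // ltnS; move: (sum_le ls j); rewrite hs.
  move=> /forallP hall.
  have hs : (\sum_(t < s) mwt (ls t) = m)%N.
    rewrite sum_mwt -[RHS]hL0 /mwt; apply: eq_bigr => j _; by rewrite (eqP (hall j)).
  rewrite hs eqxx /=; apply/eqP/ffunP => j; apply/val_inj.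
  by rewrite /= ffunE (eqP (hall j)) inordK.
move=> ls /andP [/eqP hs /eqP hh].
have hall : forall j, (\sum_(t < s) ls t j)%N = L j.
  by move=> j; rewrite -hh ffunE inordK // ltnS; move: (sum_le ls j); rewrite hs.
rewrite /w big_split big_split /=.
rewrite (eq_bigr (fun i : 'I_s => multinom C (\sum_(t < s | (t < i)%N) mwt (ls t) + k)%N (ls i))); last first.
  by move=> i _; rewrite addnC.
rewrite prodz.
have -> : \prod_(i < s) Qm q (ls i) = \prod_(j < m) q j.+2 ^+ L j.
  rewrite /Qm exchange_big /=; apply: eq_bigr => j _.
  by rewrite prodrXr hall.
rewrite [q 1%N ^ _ * _]mulrC; congr (_ * (_ ^ _) * _).
rewrite sumrB -!Posz_sum; congr (Posz _ - Posz _).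
  rewrite big_split /= big_const_ord iter_addn_0 mulnC addnC; congr (_ + _)%N.
  rewrite (eq_bigr (fun i : 'I_s => \sum_(t < s) if (t < i)%N then mwt (ls t) else 0)%N); last first.
    by move=> i _; rewrite big_mkcond.
  rewrite exchange_big /=; apply: eq_bigr => t _; exact: cnt_gt.
rewrite /mabs exchange_big /=; apply: eq_bigr => j _; by rewrite hall.
Qed.
End Part5.

Unset Implicit Arguments.

Theorem mainTheorem4 (R : realType) (q : nat -> R[i]) (hq : q 1%N != 0)
    (s n k : nat) (hkn : (k <= n)%N) :
  bracket_phi (series_of q) s n k = rhs_phi q s n k.
Proof.
rewrite /bracket_phi /rhs_phi.
have f0 : series_of q 0 = 0 by [].
have [H1 H0] := iter_poly (n.+1) f0 s.
rewrite (exp_poly H1 k (leqnSn n)).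
have hF : forall i, (i <= (n - k).+1)%N -> (\poly_(i < n.+2) series_of q i)`_i = series_of q i.
  by move=> i hi; rewrite coef_poly ifT //; lia.
have E := T_formula hq hF s k (leqnn (n - k)).
rewrite subnKC // in E.
rewrite E (@G_coefC _ _ _ hq).
by rewrite mulrAC.
Qed.
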